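(* Let $W_1,\dots,W_N$ be independent with $W_j\sim\mathrm{Bernoulli}(r_j)$. Let $\alpha_1,\dots,\alpha_N\ge0$ with $\sum_j\alpha_j=1$, and set $N_\alpha=1/\max_j\alpha_j$. Let $\hat r=\sum_j\alpha_jW_j$ and $r^*=\sum_j\alpha_jr_j$. Then for any $r$ with $0<r<r^*$, $$\Pr(\hat r<r)\le\exp\{-N_\alpha D(r\|r^* )\},$$ and for any $\tilde r$ with $r^*<\tilde r<1$, $$\Pr(\hat r>\tilde r)\le\exp\{-N_\alpha D(\tilde r\|r^* )\},$$ where $D(p\|q)=p\log\frac pq+(1-p)\log\frac{1-p}{1-q}$ is the relative entropy between Bernoulli$(p)$ and Bernoulli$(q)$. *)

(* Defs.v *)
From Stdlib Require Import Reals List.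
Import ListNotations.
Open Scope R_scope.

(* Sample space of N independent Bernoulli trials: all boolean lists of
   length N; position j (0-based) is the value of W_{j+1}. *)
Fixpoint outcomes (n : nat) : list (list bool) :=
  match n with
  | O => [nil]
  | S m => map (cons true) (outcomes m) ++ map (cons false) (outcomes m)
  end.

Definition sumR (l : list R) : R := fold_right Rplus 0 l.
Definition prodR (l : list R) : R := fold_right Rmult 1 l.

Definition bit (b : bool) : R := if b then 1 else 0.

Definition weight (N : nat) (r : nat -> R) (w : list bool) : R :=
  prodR (map (fun j => if nth j w false then r j else 1 - r j) (seq 0 N)).

Definition prob (N : nat) (r : nat -> R) (E : list bool -> bool) : R :=
  sumR (map (fun w => if E w then weight N r w else 0) (outcomes N)).

Definition rhat (N : nat) (alpha : nat -> R) (w : list bool) : R :=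
  sumR (map (fun j => alpha j * bit (nth j w false)) (seq 0 N)).

Definition rstar (N : nat) (alpha r : nat -> R) : R :=
  sumR (map (fun j => alpha j * r j) (seq 0 N)).

Definition maxR (N : nat) (alpha : nat -> R) : R :=
  fold_right Rmax 0 (map alpha (seq 0 N)).

Definition Nalpha (N : nat) (alpha : nat -> R) : R := 1 / maxR N alpha.

Definition KL (p q : R) : R :=
  p * ln (p / q) + (1 - p) * ln ((1 - p) / (1 - q)).

Definition ltb (x y : R) : bool := if Rlt_dec x y then true else false.

(* Main.v *)
Require Import Defs.
From Stdlib Require Import Reals List Lra Lia.
Import ListNotations.
Open Scope R_scope.

Lemma sumR_le (A : Type) (f g : A -> R) (l : list A) :
  (forall x, In x l -> f x <= g x) -> sumR (map f l) <= sumR (map g l).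
Proof.
  induction l as [|a l IH]; simpl; intros H; [lra|].
  apply Rplus_le_compat; [apply H; auto|apply IH; intros; apply H; auto].
Qed.

Lemma sumR_add (A : Type) (f g : A -> R) (l : list A) :
  sumR (map (fun x => f x + g x) l) = sumR (map f l) + sumR (map g l).
Proof. induction l; simpl; [lra|rewrite IHl; lra]. Qed.

Lemma sumR_scal (A : Type) (a : R) (f : A -> R) (l : list A) :
  sumR (map (fun x => a * f x) l) = a * sumR (map f l).
Proof. induction l; simpl; [lra|rewrite IHl; lra]. Qed.

Lemma sumR_ext (A : Type) (f g : A -> R) (l : list A) :
  (forall x, In x l -> f x = g x) -> sumR (map f l) = sumR (map g l).
Proof.
  induction l as [|a l IH]; simpl; intros H; [lra|].
  rewrite H by auto; rewrite IH; auto.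
Qed.

Lemma prodR_ext (A : Type) (f g : A -> R) (l : list A) :
  (forall x, In x l -> f x = g x) -> prodR (map f l) = prodR (map g l).
Proof.
  induction l as [|a l IH]; simpl; intros H; [lra|].
  rewrite H by auto; rewrite IH; auto.
Qed.

Lemma prodR_mul (A : Type) (f g : A -> R) (l : list A) :
  prodR (map (fun x => f x * g x) l) = prodR (map f l) * prodR (map g l).
Proof. induction l; simpl; [lra|rewrite IHl; lra]. Qed.

Lemma exp_sumR (A : Type) (f : A -> R) (l : list A) :
  exp (sumR (map f l)) = prodR (map (fun x => exp (f x)) l).
Proof. induction l; simpl; [apply exp_0|rewrite exp_plus, IHl; lra]. Qed.

Lemma prodR_le_exp (A : Type) (f g : A -> R) (l : list A) :
  (forall x, In x l -> 0 <= f x <= exp (g x)) -> prodR (map f l) <= exp (sumR (map g l)).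
Proof.
  induction l as [|a l IH]; simpl; intros H; [rewrite exp_0; lra|].
  rewrite exp_plus. destruct (H a (or_introl eq_refl)).
  assert (P : 0 <= prodR (map f l)).
  { clear IH. induction l as [|b l IH2]; simpl; [lra|].
    apply Rmult_le_pos; [apply H; simpl; auto|apply IH2; intros; apply H; simpl in *; tauto]. }
  apply Rmult_le_compat; [lra|exact P|lra|apply IH; intros; apply H; auto].
Qed.

Lemma seq_shift' k n : seq (S k) n = map S (seq k n).
Proof. revert k; induction n; intros; simpl; [auto|now rewrite IHn]. Qed.

Lemma sum_outcomes (n : nat) : forall (G : nat -> bool -> R),
  sumR (map (fun w => prodR (map (fun j => G j (nth j w false)) (seq 0 n))) (outcomes n))
  = prodR (map (fun j => G j true + G j false) (seq 0 n)).
Proof.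
  induction n as [|n IH]; intros G; simpl; [lra|].
  rewrite map_app, !map_map.
  assert (Happ : forall (l1 l2 : list R), sumR (l1 ++ l2) = sumR l1 + sumR l2).
  { induction l1; simpl; intros; [lra| rewrite IHl1; lra]. }
  rewrite Happ.
  assert (E : forall b, sumR (map (fun x => prodR (map (fun j => G j (nth j (b :: x) false)) (0%nat :: seq 1 n))) (outcomes n))
     = G 0%nat b * prodR (map (fun j => G (S j) true + G (S j) false) (seq 0 n))).
  { intros b. simpl. rewrite sumR_scal. f_equal. rewrite <- (IH (fun j => G (S j))).
    apply sumR_ext; intros w _. rewrite seq_shift', map_map. reflexivity. }
  simpl in E. simpl. rewrite (E true), (E false), seq_shift', map_map. lra.
Qed.

Lemma exp_conv b d : 0 <= b <= 1 -> exp (b * d) <= b * exp d + 1 - b.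
Proof.
  intros Hb.
  assert (H1 := exp_ineq1_le ((1 - b) * d)).
  assert (H2 := exp_ineq1_le (- (b * d))).
  assert (E1 : exp d = exp (b * d) * exp ((1 - b) * d)) by (rewrite <- exp_plus; f_equal; ring).
  assert (E2 : 1 = exp (b * d) * exp (- (b * d))) by (rewrite <- exp_plus, <- exp_0; f_equal; ring).
  assert (P := exp_pos (b * d)).
  assert (A1 : exp (b*d) * (1 + (1-b)*d) <= exp d) by (rewrite E1; apply Rmult_le_compat_l; lra).
  assert (A2 : exp (b*d) * (1 + - (b*d)) <= 1) by (rewrite E2 at 2; apply Rmult_le_compat_l; lra).
  nra.
Qed.

Lemma ln_tangent S Y : 0 < S -> 0 < Y -> ln S <= ln Y + (S - Y) / Y.
Proof.
  intros HS HY.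
  assert (H := exp_ineq1_le (ln (S / Y))).
  rewrite exp_ln in H by (apply Rdiv_lt_0_compat; auto).
  unfold Rdiv in *. rewrite ln_mult, ln_Rinv in H by (auto; apply Rinv_0_lt_compat; auto).
  assert (S * / Y - 1 = (S - Y) * / Y) by (field; lra). lra.
Qed.

Lemma factor_bound r b c : 0 <= r <= 1 -> 0 <= b <= 1 ->
  1 - r + r * exp (b * c) <= exp (b * ln (1 - r + r * exp c)).
Proof.
  intros Hr Hb.
  set (S := 1 - r + r * exp c).
  assert (HS : 0 < S) by (unfold S; assert (0 < exp c) by apply exp_pos; nra).
  assert (C1 := exp_conv b (- ln S) Hb).
  assert (C2 := exp_conv b (c - ln S) Hb).
  rewrite exp_Ropp, exp_ln in C1 by auto.
  assert (E : exp (c - ln S) = exp c / S) by (unfold Rminus; rewrite exp_plus, exp_Ropp, exp_ln by auto; reflexivity).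
  rewrite E in C2.
  set (T := exp (b * ln S)).
  assert (HT : 0 < T) by apply exp_pos.
  assert (F1 : exp (b * - ln S) * T = 1) by (unfold T; rewrite <- exp_plus, <- exp_0; f_equal; ring).
  assert (F2 : exp (b * (c - ln S)) * T = exp (b * c)) by (unfold T; rewrite <- exp_plus; f_equal; ring).
  assert (K : (1 - r) * exp (b * - ln S) + r * exp (b * (c - ln S)) <= 1).
  { apply Rle_trans with ((1 - r) * (b * / S + 1 - b) + r * (b * (exp c / S) + 1 - b)).
    apply Rplus_le_compat; apply Rmult_le_compat_l; lra.
    right. unfold S. field. fold S. lra. }
  assert (K2 := Rmult_le_compat_r T _ _ (Rlt_le _ _ HT) K).
  rewrite Rmult_plus_distr_r, !Rmult_assoc, F1, F2 in K2. lra.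
Qed.
Lemma exp_mono x y : x <= y -> exp x <= exp y.
Proof. intros [H|H]; [left; apply exp_increasing; auto|subst; lra]. Qed.

Lemma sumR_zero (A : Type) (l : list A) : sumR (map (fun _ => 0) l) = 0.
Proof. induction l; simpl; [lra|rewrite IHl; lra]. Qed.

Lemma fold_max_ge (l : list R) x : In x l -> x <= fold_right Rmax 0 l.
Proof.
  induction l; simpl; [tauto|]. intros [->|H].
  apply Rmax_l. eapply Rle_trans; [apply IHl; auto|apply Rmax_r].
Qed.

Lemma fold_max_nonneg (l : list R) : 0 <= fold_right Rmax 0 l.
Proof. induction l; simpl; [lra|]. eapply Rle_trans; [apply IHl|apply Rmax_r]. Qed.

Lemma maxR_ge N alpha j : (j < N)%nat -> alpha j <= maxR N alpha.
Proof.
  intros Hj. unfold maxR. apply fold_max_ge. apply in_map. apply in_seq. lia.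
Qed.

Lemma maxR_pos N alpha : (forall j, (j < N)%nat -> 0 <= alpha j) ->
  sumR (map alpha (seq 0 N)) = 1 -> 0 < maxR N alpha.
Proof.
  intros Ha Hs. destruct (Rle_lt_dec (maxR N alpha) 0) as [H|H]; [|auto].
  exfalso.
  assert (sumR (map alpha (seq 0 N)) <= sumR (map (fun _ => 0) (seq 0 N))).
  { apply sumR_le. intros j Hj. apply in_seq in Hj.
    assert (alpha j <= maxR N alpha) by (apply maxR_ge; lia). lra. }
  rewrite sumR_zero in H0. lra.
Qed.

Section Main.
Variables (N : nat) (r alpha : nat -> R).
Hypothesis hr : forall j, (j < N)%nat -> 0 <= r j <= 1.
Hypothesis halpha : forall j, (j < N)%nat -> 0 <= alpha j.
Hypothesis hsum : sumR (map alpha (seq 0 N)) = 1.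

Lemma rstar_bounds : 0 <= rstar N alpha r <= 1.
Proof.
  unfold rstar. split.
  - rewrite <- (sumR_zero _ (seq 0 N)). apply sumR_le. intros j Hj. apply in_seq in Hj.
    assert (0 <= r j <= 1) by (apply hr; lia). assert (0 <= alpha j) by (apply halpha; lia). nra.
  - rewrite <- hsum. apply sumR_le. intros j Hj. apply in_seq in Hj.
    assert (0 <= r j <= 1) by (apply hr; lia). assert (0 <= alpha j) by (apply halpha; lia). nra.
Qed.

Lemma weight_nonneg w : 0 <= weight N r w.
Proof.
  unfold weight. generalize (seq 0 N) (fun j (H : In j (seq 0 N)) => proj1 (in_seq N 0 j) H).
  intros l Hl. induction l; simpl; [lra|].
  apply Rmult_le_pos; [|apply IHl; intros; apply Hl; simpl; auto].
  assert (0 <= r a <= 1) by (apply hr; destruct (Hl a); simpl; auto; lia).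
  destruct (nth a w false); lra.
Qed.

Lemma jensen_ln c : let q := rstar N alpha r in
  sumR (map (fun j => alpha j * ln (1 - r j + r j * exp c)) (seq 0 N))
  <= ln (1 - q + q * exp c).
Proof.
  intros q. assert (Hq := rstar_bounds). fold q in Hq.
  assert (Hc := exp_pos c).
  set (Y := 1 - q + q * exp c).
  assert (HY : 0 < Y) by (unfold Y; nra).
  apply Rle_trans with (sumR (map (fun j => ln Y * alpha j + (/ Y * (alpha j * (1 - r j + r j * exp c)) + (-1) * alpha j)) (seq 0 N))).
  { apply sumR_le. intros j Hj. apply in_seq in Hj.
    assert (0 <= r j <= 1) by (apply hr; lia). assert (0 <= alpha j) by (apply halpha; lia).
    assert (HS : 0 < 1 - r j + r j * exp c) by nra.
    assert (T := ln_tangent _ _ HS HY).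
    apply Rle_trans with (alpha j * (ln Y + (1 - r j + r j * exp c - Y) / Y)).
    apply Rmult_le_compat_l; auto. right. field. lra. }
  rewrite !sumR_add, !sumR_scal, hsum.
  assert (E : sumR (map (fun j => alpha j * (1 - r j + r j * exp c)) (seq 0 N)) = Y).
  { rewrite (sumR_ext _ _ (fun j => alpha j + ((-1) * (alpha j * r j) + exp c * (alpha j * r j)))).
    rewrite !sumR_add, !sumR_scal, hsum. unfold Y, q, rstar. ring.
    intros; ring. }
  rewrite E. right. field. lra.
Qed.

Lemma chernoff c z (E : list bool -> bool) :
  let m := maxR N alpha in let q := rstar N alpha r in
  (forall w, E w = true -> 0 <= (c / m) * (rhat N alpha w - z)) ->
  prob N r E <= exp ((1 / m) * (- c * z + ln (1 - q + q * exp c))).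
Proof.
  intros m q HE.
  assert (Hm : 0 < m) by (apply maxR_pos; auto).
  set (G := fun j (b : bool) => (if b then r j else 1 - r j) * exp ((c / m) * (alpha j * bit b))).
  apply Rle_trans with (sumR (map (fun w => exp (- (c/m) * z) * prodR (map (fun j => G j (nth j w false)) (seq 0 N))) (outcomes N))).
  { unfold prob. apply sumR_le. intros w _.
    assert (Ew : exp (- (c/m) * z) * prodR (map (fun j => G j (nth j w false)) (seq 0 N))
       = weight N r w * exp ((c / m) * (rhat N alpha w - z))).
    { unfold G, weight, rhat. rewrite prodR_mul, <- exp_sumR.
      rewrite <- Rmult_assoc, (Rmult_comm (exp _)), Rmult_assoc, <- exp_plus.
      f_equal. f_equal. rewrite sumR_scal. ring. }
    rewrite Ew. assert (W := weight_nonneg w).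
    destruct (E w) eqn:Hw.
    - assert (X := exp_ineq1_le ((c / m) * (rhat N alpha w - z))). specialize (HE w Hw). nra.
    - apply Rmult_le_pos; [auto|left; apply exp_pos]. }
  rewrite sumR_scal, sum_outcomes.
  apply Rle_trans with (exp (- (c/m) * z) * exp (sumR (map (fun j => (alpha j / m) * ln (1 - r j + r j * exp c)) (seq 0 N)))).
  { apply Rmult_le_compat_l; [left; apply exp_pos|].
    apply prodR_le_exp. intros j Hj. apply in_seq in Hj.
    assert (0 <= r j <= 1) by (apply hr; lia). assert (0 <= alpha j) by (apply halpha; lia).
    assert (alpha j <= m) by (apply maxR_ge; lia).
    unfold G, bit. rewrite !Rmult_0_r, exp_0.
    assert (Eb : c / m * (alpha j * 1) = (alpha j / m) * c) by (field; lra). rewrite Eb.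
    assert (0 <= alpha j / m <= 1).
    { split. unfold Rdiv; apply Rmult_le_pos; [auto|left; apply Rinv_0_lt_compat; auto].
      apply Rmult_le_reg_r with m; auto. unfold Rdiv. rewrite Rmult_assoc, Rinv_l; lra. }
    assert (P := exp_pos (alpha j / m * c)).
    split; [nra|]. assert (FB := factor_bound (r j) (alpha j / m) c ltac:(auto) ltac:(auto)). lra. }
  rewrite <- exp_plus. apply exp_mono.
  rewrite (sumR_ext _ _ (fun j => / m * (alpha j * ln (1 - r j + r j * exp c)))) by (intros; unfold Rdiv; ring).
  rewrite sumR_scal. assert (J := jensen_ln c). simpl in J. fold q in J.
  assert (0 < / m) by (apply Rinv_0_lt_compat; auto).
  unfold Rdiv. rewrite Rmult_1_l. nra.
Qed.
End Main.

Lemma ln_div a b : 0 < a -> 0 < b -> ln (a / b) = ln a - ln b.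
Proof. intros; unfold Rdiv; rewrite ln_mult, ln_Rinv; try lra; apply Rinv_0_lt_compat; auto. Qed.

Lemma ltb_true a b : ltb a b = true -> a < b.
Proof. unfold ltb; destruct (Rlt_dec a b); congruence. Qed.

Lemma key_identity z q : 0 < z < 1 -> 0 < q < 1 ->
  let c := ln (z * (1 - q) / ((1 - z) * q)) in
  - c * z + ln (1 - q + q * exp c) = - KL z q.
Proof.
  intros Hz Hq c.
  assert (Hpos : 0 < z * (1 - q) / ((1 - z) * q)).
  { apply Rdiv_lt_0_compat; apply Rmult_lt_0_compat; lra. }
  unfold c. rewrite exp_ln by auto.
  replace (1 - q + q * (z * (1 - q) / ((1 - z) * q))) with ((1 - q) / (1 - z)) by (field; lra).
  unfold KL. rewrite !ln_div by (try apply Rmult_lt_0_compat; lra).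
  rewrite !ln_mult by lra. ring.
Qed.

Lemma prob_le_1 N r alpha
  (hr : forall j, (j < N)%nat -> 0 <= r j <= 1)
  (halpha : forall j, (j < N)%nat -> 0 <= alpha j)
  (hsum : sumR (map alpha (seq 0 N)) = 1) E : prob N r E <= 1.
Proof.
  assert (H := chernoff N r alpha hr halpha hsum 0 0 E). simpl in H.
  rewrite exp_0 in H. replace (1 - rstar N alpha r + rstar N alpha r * 1) with 1 in H by ring.
  rewrite ln_1 in H. replace (1 / maxR N alpha * (- 0 * 0 + 0)) with 0 in H by ring.
  rewrite exp_0 in H. apply H. intros; unfold Rdiv; lra.
Qed.

Lemma exp_ge_1 t : 0 <= t -> 1 <= exp t.
Proof. intros Ht; assert (H := exp_ineq1_le t); lra. Qed.

Lemma ln_0 : ln 0 = 0.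
Proof. unfold ln; destruct (Rlt_dec 0 0) as [h|h]; [exfalso; exact (Rlt_irrefl _ h)|reflexivity]. Qed.

Lemma ln_neg_lt1 x : 0 < x < 1 -> ln x < 0.
Proof. intros; rewrite <- ln_1; apply ln_increasing; lra. Qed.

Theorem mainTheorem8 (N : nat) (r alpha : nat -> R)
  (hr : forall j, (j < N)%nat -> 0 <= r j <= 1)
  (halpha : forall j, (j < N)%nat -> 0 <= alpha j)
  (hsum : sumR (map alpha (seq 0 N)) = 1) :
  (forall x, 0 < x -> x < rstar N alpha r ->
     prob N r (fun w => ltb (rhat N alpha w) x)
       <= exp (- (Nalpha N alpha * KL x (rstar N alpha r)))) /\
  (forall y, rstar N alpha r < y -> y < 1 ->
     prob N r (fun w => ltb y (rhat N alpha w))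
       <= exp (- (Nalpha N alpha * KL y (rstar N alpha r)))).
Proof.
  assert (Hm := maxR_pos N alpha halpha hsum).
  assert (Hq := rstar_bounds N r alpha hr halpha hsum).
  assert (Hinv : 0 < 1 / maxR N alpha) by (apply Rdiv_lt_0_compat; lra).
  unfold Nalpha. set (q := rstar N alpha r) in *. set (m := maxR N alpha) in *.
  split.
  - intros x Hx Hxq.
    destruct (Req_dec q 1) as [Hq1|Hq1].
    + eapply Rle_trans; [apply (prob_le_1 N r alpha hr halpha hsum)|].
      apply exp_ge_1. rewrite Hq1. unfold KL.
      replace (1 - 1) with 0 by ring. unfold Rdiv. rewrite Rinv_0, Rmult_0_r, ln_0, Rinv_1, Rmult_1_r.
      assert (ln x < 0) by (apply ln_neg_lt1; lra). assert (0 < / m) by (apply Rinv_0_lt_compat; lra). assert (x * ln x < 0) by nra. nra.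
    + assert (Hq' : 0 < q < 1) by lra.
      assert (K := key_identity x q ltac:(lra) Hq'). simpl in K.
      set (c := ln (x * (1 - q) / ((1 - x) * q))) in K.
      assert (Hc : c <= 0).
      { unfold c. destruct (Req_dec (x * (1 - q) / ((1 - x) * q)) 1) as [E|E].
        rewrite E, ln_1; lra.
        left. apply ln_neg_lt1. split.
        apply Rdiv_lt_0_compat; apply Rmult_lt_0_compat; lra.
        apply Rmult_lt_reg_r with ((1 - x) * q). apply Rmult_lt_0_compat; lra.
        unfold Rdiv. rewrite Rmult_assoc, Rinv_l, Rmult_1_r; [nra|].
        apply Rmult_integral_contrapositive; split; lra. }
      eapply Rle_trans.
      * apply (chernoff N r alpha hr halpha hsum c x). intros w Hw.
        apply ltb_true in Hw. fold m. assert (c / m <= 0).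
        { unfold Rdiv. assert (0 < / m) by (apply Rinv_0_lt_compat; lra). nra. }
        nra.
      * fold m q. rewrite K. right. f_equal. ring.
  - intros y Hqy Hy.
    destruct (Req_dec q 0) as [Hq0|Hq0].
    + eapply Rle_trans; [apply (prob_le_1 N r alpha hr halpha hsum)|].
      apply exp_ge_1. rewrite Hq0. unfold KL.
      unfold Rdiv. rewrite Rinv_0, Rmult_0_r, ln_0, Rminus_0_r, Rinv_1, Rmult_1_r.
      assert (ln (1 - y) < 0) by (apply ln_neg_lt1; lra). assert (0 < / m) by (apply Rinv_0_lt_compat; lra). assert ((1 - y) * ln (1 - y) < 0) by nra. nra.
    + assert (Hq' : 0 < q < 1) by lra.
      assert (K := key_identity y q ltac:(lra) Hq'). simpl in K.
      set (c := ln (y * (1 - q) / ((1 - y) * q))) in K.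
      assert (Hc : 0 <= c).
      { unfold c. rewrite <- ln_1. destruct (Req_dec (y * (1 - q) / ((1 - y) * q)) 1) as [E|E].
        rewrite E; lra.
        left. apply ln_increasing; [lra|].
        apply Rmult_lt_reg_r with ((1 - y) * q). apply Rmult_lt_0_compat; lra.
        unfold Rdiv. rewrite Rmult_assoc, Rinv_l, Rmult_1_r; [nra|].
        apply Rmult_integral_contrapositive; split; lra. }
      eapply Rle_trans.
      * apply (chernoff N r alpha hr halpha hsum c y). intros w Hw.
        apply ltb_true in Hw. fold m. assert (0 <= c / m).
        { unfold Rdiv. assert (0 < / m) by (apply Rinv_0_lt_compat; lra). nra. }
        nra.
      * fold m q. rewrite K. right. f_equal. ring.
Qed.
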